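(* Let $n$ be a natural number and $A$ a pointed $(n+1)$-truncated type. Then the total space of the universal pointed $n$-covering of $A$ is contractible.
   Context: Work in homotopy type theory. A pointed $n$-covering of a pointed type $A$ with pointing map $a:1\to A$ is a factorization $a=p\circ i$ with $i:1\to B$ and $p:B\to A$ having $n$-type fibers; a morphism of pointed $n$-coverings is a map between total spaces commuting with the projections and the points; the universal pointed $n$-covering is the one admitting a unique morphism to every pointed $n$-covering. *)

(* Defs.v *)
Definition IsContr (X : Type) : Type := { x : X & forall y : X, x = y }.

(* Truncation levels shifted by 2: [IsTruncM2 k X] means X is a (k-2)-type. *)
Fixpoint IsTruncM2 (k : nat) (X : Type) : Type :=
  match k with
  | O => IsContr X
  | S k' => forall x y : X, IsTruncM2 k' (x = y)
  end.

Definition IsNType (n : nat) (X : Type) : Type := IsTruncM2 (S (S n)) X.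

Definition hfiber {B A : Type} (p : B -> A) (y : A) : Type :=
  { b : B & p b = y }.

(* A pointed n-covering of the pointed type (A, a): a factorization of the
   pointing map a : 1 -> A as  a = p o i  with i : 1 -> B (a point of B) and
   p : B -> A having n-type fibers. *)
Record PtdCov (n : nat) (A : Type) (a : A) : Type := {
  cov_tot : Type;
  cov_pt : cov_tot;
  cov_proj : cov_tot -> A;
  cov_pt_eq : cov_proj cov_pt = a;
  cov_fib : forall y : A, IsNType n (hfiber cov_proj y)
}.

Arguments cov_tot {n A a} _.
Arguments cov_pt {n A a} _.
Arguments cov_proj {n A a} _ _.
Arguments cov_pt_eq {n A a} _.
Arguments cov_fib {n A a} _ _.

Definition CovMor {n : nat} {A : Type} {a : A} (C D : PtdCov n A a) : Type :=
  { f : cov_tot C -> cov_tot D &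
  { H : forall b, cov_proj D (f b) = cov_proj C b &
  { K : f (cov_pt C) = cov_pt D &
    eq_trans (f_equal (cov_proj D) K) (cov_pt_eq D)
    = eq_trans (H (cov_pt C)) (cov_pt_eq C) } } }.

Definition IsUniversalCov {n : nat} {A : Type} {a : A} (U : PtdCov n A a) : Type :=
  forall C : PtdCov n A a, IsContr (CovMor U C).

(* Main.v *)
Require Import Defs.

Lemma trunc_retract (k : nat) : forall (X Y : Type) (r : X -> Y) (s : Y -> X),
  (forall y, r (s y) = y) -> IsTruncM2 k X -> IsTruncM2 k Y.
Proof.
  induction k as [|k IH]; intros X Y r s rs HX; simpl in *.
  - destruct HX as [x0 c]. exists (r x0). intro y.
    exact (eq_trans (f_equal r (c (s y))) (rs y)).
  - intros y1 y2.
    apply (IH (s y1 = s y2) (y1 = y2)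
      (fun q => eq_trans (eq_sym (rs y1)) (eq_trans (f_equal r q) (rs y2)))
      (fun p => f_equal s p)).
    + intro p. destruct p. simpl. destruct (rs y1). reflexivity.
    + apply HX.
Qed.

Lemma f_equal_const {X Y : Type} (c : Y) (x y : X) (p : x = y) :
  f_equal (fun _ => c) p = eq_refl.
Proof. destruct p. reflexivity. Qed.

Definition trivCov (n : nat) (A : Type) (a : A) (HA : IsNType (S n) A) :
  PtdCov n A a.
Proof.
  refine {| cov_tot := unit; cov_pt := tt; cov_proj := fun _ => a;
            cov_pt_eq := eq_refl; cov_fib := _ |}.
  intro y. unfold IsNType.
  apply (trunc_retract _ (a = y) _ (fun p => existT _ tt p) (fun w => projT2 w)).
  - intros [u p]. destruct u. reflexivity.
  - exact (HA a y).
Defined.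

Theorem mainTheorem9 (n : nat) (A : Type) (a : A)
  (HA : IsNType (S n) A)
  (U : PtdCov n A a) (HU : IsUniversalCov U) :
  IsContr (cov_tot U).
Proof.
  destruct (HU (trivCov n A a HA)) as [[g [Hm [Km coh]]] _].
  simpl in g, Hm, Km, coh.
  rewrite f_equal_const in coh. simpl in coh.
  set (pe := cov_pt_eq U) in *.
  assert (c1 : eq_trans (f_equal (cov_proj U) (@eq_refl _ (cov_pt U))) pe
     = eq_trans (eq_trans pe (Hm (cov_pt U))) pe).
  { simpl. rewrite <- (eq_trans_assoc pe (Hm _) pe), <- coh. apply eq_trans_refl_l. }
  pose (m1 := existT _ (fun _ : cov_tot U => cov_pt U)
      (existT _ (fun b => eq_trans pe (Hm b)) (existT _ eq_refl c1)) : CovMor U U).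
  assert (c2 : eq_trans (f_equal (cov_proj U) (@eq_refl _ (cov_pt U))) pe
     = eq_trans eq_refl pe).
  { reflexivity. }
  pose (m2 := existT _ (fun b : cov_tot U => b)
      (existT _ (fun b => eq_refl) (existT _ eq_refl c2)) : CovMor U U).
  destruct (HU U) as [c Hc].
  pose proof (eq_trans (eq_sym (Hc m1)) (Hc m2)) as E.
  exists (cov_pt U). intro y.
  exact (f_equal (fun m : CovMor U U => projT1 m y) E).
Qed.
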